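(* The following are equivalent: (i) $\sup_{d\in\mathbb N} n^{X_d}(\varepsilon)=\infty$ for every $\varepsilon\in(0,1)$; (ii) $\inf_{d\in\mathbb N}\bar\lambda^{X_d}_1=0$.
   Context: For each $d\in\mathbb N$, $X_d$ is a random element of a separable Hilbert space $H_d$ with $\mathbb E X_d=0$ and $\mathbb E\|X_d\|_{H_d}^2<\infty$. For a centered Hilbert-space random element $Z$ with finite second moment, $\lambda^Z_1\ge\lambda^Z_2\ge\dots\ge 0$ denote the eigenvalues of its covariance operator $K^Z$ listed with multiplicity (padded with zeros if there are finitely many), $\Lambda^Z=\sum_k\lambda^Z_k=\mathbb E\|Z\|^2$, and $\bar\lambda^Z_k=\lambda^Z_k/\Lambda^Z$. It is assumed that $\lambda^{X_d}_1>0$ for all $d$. The average case approximation complexity is $n^{X_d}(\varepsilon)=\min\{n\in\mathbb N: e^{X_d}(n)\le \varepsilon\, e^{X_d}(0)\}$ for $\varepsilon\in(0,1)$, where $e^{X_d}(0)=(\mathbb E\|X_d\|^2)^{1/2}$ and $e^{X_d}(n)$ is the infimum of $(\mathbb E\|X_d-\sum_{m=1}^n l_m(X_d)\psi_m\|^2)^{1/2}$ over all $\psi_m\in H_d$, $l_m\in H_d^*$; equivalently $n^{X_d}(\varepsilon)=\min\{n\in\mathbb N:\ \sum_{k>n}\bar\lambda^{X_d}_k\le\varepsilon^2\}$. *)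

(* Defs.v *)
From Stdlib Require Import Reals Lra.
Open Scope R_scope.

(* An eigenvalue sequence of a covariance operator of a centered random
   element with finite second moment: lam k = lambda_{k+1} (0-based index),
   nonnegative, nonincreasing, summable with sum Lam = E||X||^2. *)
Definition covariance_eigenvalues (lam : nat -> R) (Lam : R) : Prop :=
  (forall k, 0 <= lam k) /\
  (forall k, lam (S k) <= lam k) /\
  infinite_sum lam Lam.

Fixpoint psum (lam : nat -> R) (n : nat) : R :=
  match n with
  | O => 0
  | S m => psum lam m + lam m
  end.

(* normalized tail  sum_{k>n} bar-lambda_k *)
Definition normalized_tail (lam : nat -> R) (Lam : R) (n : nat) : R :=
  (Lam - psum lam n) / Lam.

(* n is the average case approximation complexity n(eps):
   the minimal n with sum_{k>n} bar-lambda_k <= eps^2. *)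
Definition is_complexity (lam : nat -> R) (Lam : R) (eps : R) (n : nat) : Prop :=
  normalized_tail lam Lam n <= eps ^ 2 /\
  (forall m, (m < n)%nat -> eps ^ 2 < normalized_tail lam Lam m).

Definition is_glb (E : R -> Prop) (m : R) : Prop :=
  (forall x, E x -> m <= x) /\ (forall b, (forall x, E x -> b <= x) -> b <= m).

(* Main.v *)
Require Import Defs.
From Stdlib Require Import Reals Lra Lia Classical.
Open Scope R_scope.

Lemma psum_sum (l : nat -> R) n : psum l (S n) = sum_f_R0 l n.
Proof. induction n; simpl in *; [lra| rewrite <- IHn; simpl; lra]. Qed.

Lemma sum_ge0 (l : nat -> R) n : (forall k, 0 <= l k) -> l 0%nat <= sum_f_R0 l n.
Proof. intros H; induction n; simpl; [lra| specialize (H (S n)); lra]. Qed.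

Lemma lam_le0 (l : nat -> R) : (forall k, l (S k) <= l k) -> forall k, l k <= l 0%nat.
Proof. intros H k; induction k; [lra| specialize (H k); lra]. Qed.

Lemma psum_le (l : nat -> R) : (forall k, l (S k) <= l k) ->
  forall n, psum l n <= INR n * l 0%nat.
Proof.
  intros H n; induction n; [simpl; lra|].
  rewrite S_INR; simpl. pose proof (lam_le0 l H n). lra.
Qed.

Lemma Lam_ge (l : nat -> R) L : covariance_eigenvalues l L -> l 0%nat <= L.
Proof.
  intros [H0 [H1 H2]].
  destruct (Rle_or_lt (l 0%nat) L) as [h|h]; auto.
  destruct (H2 (l 0%nat - L)) as [N HN]; [lra|].
  specialize (HN N (Nat.le_refl N)). unfold R_dist in HN.
  pose proof (sum_ge0 l N H0). apply Rabs_def2 in HN. lra.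
Qed.

Lemma min_exists (P : nat -> Prop) : forall N k, (k <= N)%nat -> P k ->
  exists n, P n /\ forall m, (m < n)%nat -> ~ P m.
Proof.
  induction N; intros k Hk Pk.
  - exists k; split; auto; intros; lia.
  - destruct (classic (exists m, (m < k)%nat /\ P m)) as [[m [Hm Pm]]|Hn].
    + apply (IHN m); auto; lia.
    + exists k; split; auto. intros m Hm Pm; apply Hn; eauto.
Qed.

Lemma complexity_exists (l : nat -> R) L eps : covariance_eigenvalues l L ->
  0 < l 0%nat -> 0 < eps -> exists n, is_complexity l L eps n.
Proof.
  intros Hc Hp He. pose proof (Lam_ge l L Hc) as HL.
  destruct Hc as [H0 [H1 H2]].
  destruct (H2 (eps^2 * L)) as [N HN].
  { apply Rmult_lt_0_compat; [apply pow_lt|]; lra. }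
  specialize (HN N (Nat.le_refl N)). unfold R_dist in HN.
  apply Rabs_def2 in HN. rewrite <- psum_sum in HN.
  assert (T : normalized_tail l L (S N) <= eps ^ 2).
  { unfold normalized_tail. apply Rmult_le_reg_r with L; [lra|].
    unfold Rdiv; rewrite Rmult_assoc, Rinv_l; lra. }
  destruct (min_exists (fun n => normalized_tail l L n <= eps ^ 2) (S N) (S N)
    (Nat.le_refl _) T) as [n [Pn Hm]].
  exists n; split; auto. intros m Hmn. apply Rnot_le_lt. apply Hm; auto.
Qed.

Theorem proposition2 (lam : nat -> nat -> R) (Lam : nat -> R)
  (Hcov : forall d, covariance_eigenvalues (lam d) (Lam d))
  (Hpos : forall d, 0 < lam d 0%nat) :
  (forall eps, 0 < eps < 1 ->
     ~ (exists M : nat, forall d n, is_complexity (lam d) (Lam d) eps n -> (n <= M)%nat))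
  <->
  is_glb (fun x => exists d, x = lam d 0%nat / Lam d) 0.
Proof.
  assert (HL : forall d, lam d 0%nat <= Lam d) by (intro d; apply Lam_ge, Hcov).
  assert (Hlb : forall x, (exists d, x = lam d 0%nat / Lam d) -> 0 <= x).
  { intros x [d ->]. specialize (Hpos d). specialize (HL d).
    apply Rlt_le, Rdiv_lt_0_compat; lra. }
  split.
  - intros Hi. split; auto. intros b Hb.
    destruct (Rle_or_lt b 0) as [h|h]; auto. exfalso.
    set (c := Rmin b 1).
    assert (c0 : 0 < c) by (unfold c; apply Rmin_glb_lt; lra).
    assert (c1 : c <= 1) by apply Rmin_r.
    assert (cb : c <= b) by apply Rmin_l.
    apply (Hi (1 - c/4)); [lra|].
    exists 1%nat. intros d n [Hn Hm].
    destruct (Compare_dec.le_lt_dec n 1) as [l|l]; auto. exfalso.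
    specialize (Hm 1%nat l). unfold normalized_tail in Hm. simpl in Hm.
    assert (Hbd : b <= lam d 0%nat / Lam d) by (apply Hb; eauto).
    specialize (Hpos d). specialize (HL d).
    assert (E : (Lam d - (0 + lam d 0%nat)) / Lam d = 1 - lam d 0%nat / Lam d)
      by (field; lra).
    rewrite E in Hm. nra.
  - intros [_ Hg] eps He [M HM].
    set (b := (1 - eps^2) / (INR M + 1)).
    assert (Mp : 0 < INR M + 1) by (pose proof (pos_INR M); lra).
    assert (e2 : eps^2 < 1) by nra.
    assert (b0 : 0 < b) by (apply Rdiv_lt_0_compat; lra).
    destruct (classic (exists d, lam d 0%nat / Lam d < b)) as [[d Hd]|Hn].
    + destruct (complexity_exists (lam d) (Lam d) eps (Hcov d) (Hpos d)) as [n Hc];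
        [lra|].
      pose proof (HM d n Hc) as HnM. destruct Hc as [Ht _].
      destruct (Hcov d) as [_ [H1 _]].
      pose proof (psum_le _ H1 n) as Hps.
      specialize (Hpos d). specialize (HL d).
      apply le_INR in HnM.
      unfold normalized_tail in Ht.
      assert (Lp : 0 < Lam d) by lra.
      assert (T1 : 1 - INR n * (lam d 0%nat / Lam d) <= eps^2).
      { apply Rle_trans with ((Lam d - psum (lam d) n) / Lam d); auto.
        apply Rmult_le_reg_r with (Lam d); auto.
        unfold Rdiv. rewrite Rmult_assoc, Rinv_l by lra.
        rewrite Rmult_minus_distr_r, Rmult_assoc, Rmult_assoc, Rinv_l by lra. lra. }
      unfold b in Hd.
      apply Rmult_lt_compat_r with (r := INR M + 1) in Hd; auto.
      unfold Rdiv in Hd at 2. rewrite Rmult_assoc, Rinv_l in Hd by lra.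
      assert (0 <= lam d 0%nat / Lam d) by (apply Hlb; eauto).
      nra.
    + assert (b <= 0); [|lra]. apply Hg. intros x [d ->].
      apply Rnot_lt_le. intro; apply Hn; eauto.
Qed.
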